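(* Let $P$ be a reversible ergodic Markov chain on a finite set $X$ with stationary distribution $\pi$, let $S,M\subseteq X$ be disjoint and nonempty, $\sigma=\pi|_S$, and $q=(q_S,q_M)\in[0,1)^2$. Let $(Y_i(q))_{i\ge0}$ be the Markov chain with transition matrix $P(q)$ and $Y_0(q)\sim\sigma$, and let $D(q)$ be the discriminant matrix of $P(q)$. Then for all $t,t'\in\mathbb N$ with $t'>t$, \[ \big\|\Pi_M D(q)^t|\sqrt\sigma\rangle\big\|\ \ge\ \Pr\big(Y_t(q)\in M,\ Y_{t'}(q)\in S\big). \]
   Context: $(\pi|_S)_u=\pi_u/\pi(S)$ for $u\in S$ and $0$ otherwise; $|\sqrt\sigma\rangle=\sum_u\sqrt{\sigma_u}|u\rangle$. The interpolated chain is $P(q)_{u,v}=(1-q_S)P_{u,v}+q_S\delta_{uv}$ if $u\in S$, $(1-q_M)P_{u,v}+q_M\delta_{uv}$ if $u\in M$, and $P_{u,v}$ otherwise. The discriminant matrix of a reversible chain $Q$ is $D(Q)=\sqrt{Q\circ Q^T}$ (entrywise). $\Pi_M=\sum_{u\in M}|u\rangle\langle u|$. *)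

(* Defs.v *)
From HB Require Import structures.
From mathcomp Require Import all_boot all_order all_algebra.
Set Implicit Arguments. Unset Strict Implicit. Unset Printing Implicit Defensive.
Import Order.TTheory GRing.Theory Num.Theory.
Local Open Scope ring_scope.

Section Defs.
Variable R : rcfType.
Variable n : nat.

(* t-th matrix power (works for any size n, including 0) *)
Definition mxpow (A : 'M[R]_n) (t : nat) : 'M[R]_n := iter t (mulmx A) 1%:M.

Definition stochastic (P : 'M[R]_n) : Prop :=
  (forall u v, 0 <= P u v) /\ (forall u, \sum_v P u v = 1).

Definition irreducible (P : 'M[R]_n) : Prop :=
  forall u v, exists t, 0 < mxpow P t u v.

(* gcd {t : (P^t)_{uu} > 0} = 1 for every state u *)
Definition aperiodic (P : 'M[R]_n) : Prop :=
  forall u (d : nat), (forall t, 0 < mxpow P t u u -> (d %| t)%N) -> d = 1%N.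

Definition ergodic (P : 'M[R]_n) : Prop := irreducible P /\ aperiodic P.

Definition stationary_dist (P : 'M[R]_n) (pi : 'rV[R]_n) : Prop :=
  (forall u, 0 <= pi 0 u) /\ \sum_u pi 0 u = 1 /\ pi *m P = pi.

Definition reversible (P : 'M[R]_n) (pi : 'rV[R]_n) : Prop :=
  forall u v, pi 0 u * P u v = pi 0 v * P v u.

Definition restr_dist (pi : 'rV[R]_n) (S : {set 'I_n}) : 'rV[R]_n :=
  \row_u (if u \in S then pi 0 u / (\sum_(w in S) pi 0 w) else 0).

Definition interp (P : 'M[R]_n) (S M : {set 'I_n}) (qS qM : R) : 'M[R]_n :=
  \matrix_(u, v)
    (if u \in S then (1 - qS) * P u v + qS * (u == v)%:R
     else if u \in M then (1 - qM) * P u v + qM * (u == v)%:R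
     else P u v).

Definition discriminant (Q : 'M[R]_n) : 'M[R]_n :=
  \matrix_(u, v) Num.sqrt (Q u v * Q v u).

Definition sqrt_vec (sigma : 'rV[R]_n) : 'cV[R]_n :=
  \col_u Num.sqrt (sigma 0 u).

Definition projnorm (M : {set 'I_n}) (x : 'cV[R]_n) : R :=
  Num.sqrt (\sum_(u in M) x u 0 ^+ 2).

(* Pr(Y_t in M, Y_t' in S) for the chain with kernel Q and Y_0 ~ sigma, t <= t' *)
Definition prob_two_times (Q : 'M[R]_n) (sigma : 'rV[R]_n)
    (M S : {set 'I_n}) (t t' : nat) : R :=
  \sum_(u in M) \sum_(v in S)
     (sigma *m mxpow Q t) 0 u * mxpow Q (t' - t) u v.
End Defs.

(* Main.v *)
Set Warnings "-notation-overridden,-ambiguous-paths".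
Require Import Defs.
From HB Require Import structures.
From mathcomp Require Import all_boot all_order all_algebra.
From mathcomp Require Import ring lra.
Import Order.TTheory GRing.Theory Num.Theory.
Local Open Scope ring_scope.
Set Implicit Arguments. Unset Strict Implicit. Unset Printing Implicit Defensive.

Section Gen.
Variable R : rcfType.
Variable n : nat.
Implicit Types (Q : 'M[R]_n).

Lemma mxpowS Q t : mxpow Q t.+1 = Q *m mxpow Q t. Proof. by []. Qed.
Lemma mxpow0 Q : mxpow Q 0 = 1%:M. Proof. by []. Qed.
Lemma mxpowSr Q t : mxpow Q t.+1 = mxpow Q t *m Q.
Proof.
elim: t => [|t IH].
  by rewrite mxpowS mxpow0 mulmx1 mul1mx.
by rewrite [LHS]mxpowS [in LHS]IH mulmxA.
Qed.

Definition nonneg Q := forall u v, 0 <= Q u v.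
Definition rowsum1 Q := forall u, \sum_v Q u v = 1.

Lemma mxpow_ge0 Q t : nonneg Q -> nonneg (mxpow Q t).
Proof.
move=> H; elim: t => [|t IH] u v.
  by rewrite mxpow0 mxE; case: eqP => _; rewrite ?mulr1n ?mulr0n.
rewrite mxpowS mxE; apply: sumr_ge0 => k _; exact: mulr_ge0.
Qed.

Lemma mxpow_sum1 Q t : rowsum1 Q -> rowsum1 (mxpow Q t).
Proof.
move=> H; elim: t => [|t IH] u.
  rewrite mxpow0 (bigD1 u) //= big1 ?mxE ?eqxx ?addr0 // => v /negbTE.
  by rewrite mxE eq_sym => ->.
rewrite mxpowS.
under eq_bigr do rewrite mxE.
rewrite exchange_big /=.
under eq_bigr do rewrite -mulr_sumr IH mulr1.
exact: H.
Qed.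

Lemma mxpow_rev Q (w : 'I_n -> R) t : (forall u v, w u * Q u v = w v * Q v u) ->
  forall u v, w u * mxpow Q t u v = w v * mxpow Q t v u.
Proof.
move=> H; elim: t => [|t IH] u v.
  rewrite mxpow0 !mxE; case: (eqVneq u v) => [->|neq] //.
  by rewrite !mulr0.
rewrite [in RHS]mxpowSr mxpowS !mxE !mulr_sumr; apply: eq_bigr => k _.
by rewrite mulrA H mulrAC IH -mulrA.
Qed.

Lemma disc_eq Q (w : 'I_n -> R) : nonneg Q -> (forall u, 0 < w u) ->
  (forall u v, w u * Q u v = w v * Q v u) ->
  forall u v, discriminant Q u v = Num.sqrt (w u) / Num.sqrt (w v) * Q u v.
Proof.
move=> H0 Hw H u v; rewrite mxE.
have wv0 : w v != 0 by rewrite gt_eqF.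
have -> : Q v u = w u * Q u v / w v by rewrite H [w v * _]mulrC mulfK.
have Hge : 0 <= Num.sqrt (w u) / Num.sqrt (w v) * Q u v.
  by rewrite mulr_ge0 // divr_ge0 // sqrtr_ge0.
rewrite -[RHS]ger0_norm // -sqrtr_sqr; congr Num.sqrt.
rewrite !exprMn exprVn !sqr_sqrtr ?ltW //.
by field.
Qed.

Lemma mxpow_sim (D Q : 'M[R]_n) (s : 'I_n -> R) : (forall u, s u != 0) ->
 (forall u v, D u v = s u / s v * Q u v) ->
 forall t u v, mxpow D t u v = s u / s v * mxpow Q t u v.
Proof.
move=> Hs H; elim => [|t IH] u v.
  rewrite !mxpow0 !mxE; case: eqVneq => [->|_].
    by rewrite divff // mulr1.
  by rewrite !mulr0n mulr0.
rewrite !mxpowS !mxE mulr_sumr; apply: eq_bigr => k _; rewrite H IH.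
by field; rewrite ?Hs.
Qed.

End Gen.

Section Final.
Variable R : rcfType.
Lemma final_ineq (I : finType) (A : {set I}) (al a b : I -> R) :
  (forall u, 0 <= al u) -> (forall u, 0 <= a u) -> (forall u, 0 <= b u) ->
  (forall u, b u <= 1) -> \sum_u al u * b u = 1 ->
  \sum_(u in A) al u * a u * b u <= Num.sqrt (\sum_(u in A) al u * a u ^+ 2).
Proof.
move=> Hal Ha Hb0 Hb1 Hsum.
set X := \sum_(u in A) _.
set Aa := \sum_(u in A) _.
set B := \sum_(u in A) al u * b u ^+ 2.
have HX : 0 <= X by apply: sumr_ge0 => u _; rewrite !mulr_ge0.
have HB : B <= 1.
  rewrite /B -Hsum big_mkcond /=; apply: ler_sum => u _.
  case: ifP => _; last by rewrite mulr_ge0.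
  by rewrite ler_wpM2l // expr2 ler_piMr.
have H0 : 0 <= \sum_(u in A) al u * (a u - X * b u) ^+ 2.
  by apply: sumr_ge0 => u _; rewrite mulr_ge0 // sqr_ge0.
have E : \sum_(u in A) al u * (a u - X * b u) ^+ 2 = Aa - 2 * X * X + X ^+ 2 * B.
  have -> : 2 * X * X = \sum_(u in A) 2 * X * (al u * a u * b u).
    by rewrite -mulr_sumr.
  rewrite /B mulr_sumr /Aa -sumrB -big_split /=.
  by apply: eq_bigr => u _; ring.
have HX2 : X ^+ 2 <= Aa.
  have : X ^+ 2 * B <= X ^+ 2 by rewrite ler_piMr ?sqr_ge0.
  move: H0; rewrite E => H0 H1; nra.
by rewrite -(ger0_norm HX) -sqrtr_sqr ler_wsqrtr.
Qed.
End Final.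

Lemma sum_delta (R : rcfType) (n : nat) (u : 'I_n) :
  \sum_v ((u == v)%:R : R) = 1.
Proof.
rewrite (bigD1 u) //= eqxx big1 ?addr0 // => v /negbTE.
by rewrite eq_sym => ->.
Qed.

Lemma sub_sum_le (R : rcfType) (I : finType) (A : {set I}) (f : I -> R) :
  (forall u, 0 <= f u) -> \sum_(u in A) f u <= \sum_u f u.
Proof.
move=> H; rewrite [X in X <= _]big_mkcond /=; apply: ler_sum => u _.
by case: ifP.
Qed.

Theorem mainTheorem11 (R : rcfType) (n : nat) (P : 'M[R]_n) (pi : 'rV[R]_n)
    (S M : {set 'I_n}) (qS qM : R) :
  stochastic P -> ergodic P -> stationary_dist P pi -> reversible P pi ->
  [disjoint S & M] -> S != set0 -> M != set0 ->
  0 <= qS -> qS < 1 -> 0 <= qM -> qM < 1 ->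
  forall t t' : nat, (t < t')%N ->
    projnorm M (mxpow (discriminant (interp P S M qS qM)) t
                  *m sqrt_vec (restr_dist pi S))
    >= prob_two_times (interp P S M qS qM) (restr_dist pi S) M S t t'.
Proof.
move=> [P0 P1] [Hirr _] [pi0 [pisum piP]] Hrev Hdisj SN MN qS0 qS1 qM0 qM1 t t' _.
set Q := interp P S M qS qM.
pose q u := if u \in S then qS else if u \in M then qM else 0.
have q0 u : 0 <= q u by rewrite /q; case: ifP => _ //; case: ifP.
have q1 u : q u < 1 by rewrite /q; case: ifP => _ //; case: ifP => _ //; exact: ltr01.
have q1' u : 1 - q u != 0 by rewrite subr_eq0 gt_eqF.
have q1p u : 0 < 1 - q u by rewrite subr_gt0.
have HQ u v : Q u v = (1 - q u) * P u v + q u * (u == v)%:R.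
  rewrite /Q /interp mxE /q; case: ifP => _ //; case: ifP => _ //.
  by rewrite subr0 mul1r mul0r addr0.
have Qnn : nonneg Q.
  move=> u v; rewrite HQ addr_ge0 // mulr_ge0 //; exact: ltW.
have Qsum : rowsum1 Q.
  move=> u; under eq_bigr do rewrite HQ.
  by rewrite big_split /= -!mulr_sumr P1 sum_delta !mulr1 subrK.
have piPt s : pi *m mxpow P s = pi.
  elim: s => [|s IH]; first by rewrite mxpow0 mulmx1.
  by rewrite mxpowS mulmxA piP IH.
have [u0 hu0] : exists u0, 0 < pi 0 u0.
  case: (pickP (fun u => 0 < pi 0 u)) => [u hu|H]; first by exists u.
  exfalso; move: pisum; rewrite big1 => [/eqP|u _]; first by rewrite eq_sym oner_eq0.
  by move: (H u); rewrite /= lt0r pi0 andbT => /negbFE/eqP.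
have pipos v : 0 < pi 0 v.
  have [s Hs] := Hirr u0 v.
  rewrite -(piPt s) mxE (bigD1 u0) //=.
  have := mulr_gt0 hu0 Hs.
  have : 0 <= \sum_(i < n | i != u0) pi 0 i * mxpow P s i v.
    by apply: sumr_ge0 => i _; rewrite mulr_ge0 // mxpow_ge0.
  lra.
pose w u := pi 0 u / (1 - q u).
have wpos u : 0 < w u by rewrite divr_gt0.
have Hrevw u v : w u * Q u v = w v * Q v u.
  case: (eqVneq u v) => [->//|neq].
  rewrite !HQ (negbTE neq) eq_sym (negbTE neq) !mulr0 !addr0 /w.
  by rewrite !mulrA !divfK // Hrev.
pose s u := Num.sqrt (w u).
have Hs u : s u != 0 by rewrite gt_eqF // sqrtr_gt0.
have HD := mxpow_sim Hs (disc_eq Qnn wpos Hrevw).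
have Hrevt r x y : w x * mxpow Q r x y = w y * mxpow Q r y x.
  exact: mxpow_rev.
pose piS := \sum_(x in S) pi 0 x.
have piSpos : 0 < piS.
  have [s0 s0S] := set0Pn _ SN.
  rewrite /piS (bigD1 s0) //=.
  have := pipos s0.
  have : 0 <= \sum_(i in S | i != s0) pi 0 i.
    by apply: sumr_ge0 => i _; exact: ltW.
  lra.
pose k := (1 - qS) / piS.
have k0 : 0 <= k by rewrite divr_ge0 // ?subr_ge0 ltW.
have Hsig v : restr_dist pi S 0 v = if v \in S then k * w v else 0.
  rewrite mxE; case: ifP => vS //.
  rewrite /k /w /q vS -/piS; field; by rewrite !gt_eqF ?subr_gt0.
have Hsq v : sqrt_vec (restr_dist pi S) v 0 = if v \in S then Num.sqrt k * s v else 0.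
  rewrite mxE Hsig; case: ifP => _; last by rewrite sqrtr0.
  by rewrite sqrtrM.
pose a r u := \sum_(v in S) mxpow Q r u v.
have HDx u : (mxpow (discriminant Q) t *m sqrt_vec (restr_dist pi S)) u 0
    = Num.sqrt k * s u * a t u.
  rewrite mxE /a mulr_sumr [in RHS]big_mkcond /=; apply: eq_bigr => v _.
  rewrite Hsq HD; case: ifP => _; last by rewrite mulr0.
  by field; rewrite Hs.
have Hpr r u : (restr_dist pi S *m mxpow Q r) 0 u = k * w u * a r u.
  rewrite mxE /a mulr_sumr [in RHS]big_mkcond /=; apply: eq_bigr => v _.
  rewrite Hsig; case: ifP => _; last by rewrite mul0r.
  by rewrite -[LHS]mulrA -[RHS]mulrA; congr (_ * _); exact: Hrevt.
have a0 r u : 0 <= a r u.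
  by apply: sumr_ge0 => v _; exact: mxpow_ge0.
have a1 r u : a r u <= 1.
  rewrite -(mxpow_sum1 r Qsum u); apply: sub_sum_le => v; exact: mxpow_ge0.
have Htot : \sum_u k * w u * a (t' - t)%N u = 1.
  have : \sum_u (restr_dist pi S *m mxpow Q (t' - t)%N) 0 u = 1.
    under eq_bigr do rewrite mxE.
    rewrite exchange_big /=.
    under eq_bigr do rewrite -mulr_sumr (mxpow_sum1 _ Qsum) mulr1.
    under eq_bigr do rewrite mxE.
    by rewrite -big_mkcond /= -mulr_suml divff // gt_eqF.
  by under eq_bigr do rewrite Hpr.
rewrite /prob_two_times /projnorm.
under eq_bigr do rewrite -mulr_sumr Hpr.
have Hsq2 u : (Num.sqrt k * s u * a t u) ^+ 2 = k * w u * a t u ^+ 2.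
  by rewrite !exprMn !sqr_sqrtr // ltW.
under [X in _ <= Num.sqrt X]eq_bigr do rewrite HDx Hsq2.
apply: final_ineq => // [u|u|u]; [by rewrite mulr_ge0 // ltW|exact: a0|exact: a1].
Qed.
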